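(* Let $\lambda>1$, $b>0$, $s'\in(0,1]$, $r\in\mathbb{R}$, and consider the system $$x_{n+1}=s'y_n,\qquad y_{n+1}=x_n^{\lambda}e^{r-bx_{n+1}-x_n},\qquad n\ge0,$$ on $[0,\infty)^2$; put $a=r+\ln s'$. (a) Every orbit converges to $(0,0)$ if and only if $a<(\lambda-1)[1-\ln(\lambda-1)]$. (b) If $(\lambda-1)[1-\ln(\lambda-1)]<a<(\lambda-1)[1-\ln(\lambda-1)+\ln(b+1)]$, then $(0,0)$ is the only fixed point of the system in $[0,\infty)^2$, but the system has orbits in the positive quadrant that do not converge to $(0,0)$. (c) If $b\le\frac{\lambda-1}{\lambda}e^{1/(\lambda-1)}-1$ and $(\lambda-1)[1-\ln(\lambda-1)+\ln(b+1)]\le a\le\lambda-(\lambda-1)\ln\lambda$, and $x^*$ is the smallest positive solution of $x=x^\lambda e^{a-(b+1)x}$, then there are initial points $(x_0,y_0)\in[0,x^* )\times[0,x^*/s')$ whose orbit does not converge to $(0,0)$. (d) Under the hypotheses of (c), there are initial points $(x_0,y_0)\in([x^*,\lambda]\times[0,x^*/s'])\cup([0,x^*]\times[x^*/s',\lambda/s'])$ whose orbit does not converge to $(0,0)$. *)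

(* Defs.v *)
From Stdlib Require Import Reals.
Open Scope R_scope.

(* x^l for x >= 0 and real l > 0, with the convention 0^l = 0
   (Stdlib's Rpower 0 l = exp (l * ln 0) = 1 would be wrong). *)
Definition rpow (x l : R) : R := if Rle_dec x 0 then 0 else Rpower x l.

Definition step (lam b s r : R) (p : R * R) : R * R :=
  let x := fst p in let y := snd p in
  (s * y, rpow x lam * exp (r - b * (s * y) - x)).

Fixpoint orbit (lam b s r : R) (p0 : R * R) (n : nat) : R * R :=
  match n with
  | O => p0
  | S k => step lam b s r (orbit lam b s r p0 k)
  end.

Definition conv0 (lam b s r : R) (p0 : R * R) : Prop :=
  Un_cv (fun n => fst (orbit lam b s r p0 n)) 0 /\
  Un_cv (fun n => snd (orbit lam b s r p0 n)) 0.

(* Main.v *)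
Require Import Defs.
From Stdlib Require Import Reals Lra Lia Classical.
Open Scope R_scope.

Lemma rpow_pos_eq x l : 0 < x -> rpow x l = exp (l * ln x).
Proof. intros; unfold rpow; destruct (Rle_dec x 0); [lra| reflexivity]. Qed.
Lemma rpow_nonneg x l : 0 <= rpow x l.
Proof. unfold rpow; destruct (Rle_dec x 0); [lra|]. unfold Rpower; left; apply exp_pos. Qed.
Lemma rpow_pos x l : 0 < x -> 0 < rpow x l.
Proof. intros; rewrite rpow_pos_eq; auto; apply exp_pos. Qed.
Lemma rpow_0 l : rpow 0 l = 0.
Proof. unfold rpow; destruct (Rle_dec 0 0); lra. Qed.

Lemma ln_le_sub1 x : 0 < x -> ln x <= x - 1.
Proof. intros; pose proof (exp_ineq1_le (ln x)); rewrite exp_ln in H0; lra. Qed.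

Lemma exp_le_mono x y : x <= y -> exp x <= exp y.
Proof. intros [H|H]; [left; apply exp_increasing; auto| subst; lra]. Qed.

Lemma max_prop L B x : 0 < L -> 0 < B -> 0 < x ->
  L * ln x - B * x <= L * ln (L/B) - B * (L/B).
Proof.
  intros HL HB Hx. set (m := L/B).
  assert (Hm : 0 < m) by (unfold m; apply Rdiv_lt_0_compat; lra).
  assert (H1 : ln (x / m) <= x/m - 1) by (apply ln_le_sub1; apply Rdiv_lt_0_compat; lra).
  unfold Rdiv in H1; rewrite ln_mult, ln_Rinv in H1; auto; [|apply Rinv_0_lt_compat; auto].
  assert (H2 : L * (ln x + - ln m) <= L * (x * / m - 1)) by (apply Rmult_le_compat_l; lra).
  assert (H3 : L * (x * / m - 1) = B * x - B * m) by (unfold m; field; lra).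
  lra.
Qed.

Lemma root_ex L A B c : 0 < L -> 0 < B -> 0 < c -> 0 <= L * ln c + A - B*c ->
  exists z, 0 < z <= c /\ L * ln z + A - B*z = 0.
Proof.
  intros HL HB Hc H0.
  destruct (Req_dec (L * ln c + A - B*c) 0) as [E|E].
  { exists c; split; [lra|auto]. }
  set (F := fun w => L*w + A - B*exp w).
  assert (HF : continuity F) by (apply derivable_continuous; unfold F; reg).
  set (w0 := Rmin (ln c) (-(Rabs A)/L - 1) - 1).
  assert (Hw0 : w0 < ln c) by (unfold w0; pose proof (Rmin_l (ln c) (-(Rabs A)/L - 1)); lra).
  assert (Fw0 : F w0 < 0).
  { unfold F. pose proof (exp_pos w0). pose proof (Rmin_r (ln c) (-(Rabs A)/L - 1)).
    assert (w0 <= -(Rabs A)/L - 2) by (unfold w0; lra).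
    assert (L * w0 <= L * (-(Rabs A)/L - 2)) by (apply Rmult_le_compat_l; lra).
    assert (L * (-(Rabs A)/L - 2) = - Rabs A - 2 * L) by (field; lra).
    pose proof (Rle_abs A). pose proof (Rmult_lt_0_compat _ _ HB (exp_pos w0)). lra. }
  assert (Fc : 0 < F (ln c)) by (unfold F; rewrite exp_ln; lra).
  destruct (IVT F w0 (ln c) HF Hw0 Fw0 Fc) as [w [Hw Fw]].
  exists (exp w); split; [split; [apply exp_pos|]|].
  - rewrite <- (exp_ln c) by auto; apply exp_le_mono; lra.
  - unfold F in Fw; rewrite ln_exp; lra.
Qed.

Lemma not_cv_even (u : nat -> R) z : 0 < z -> (forall k, z <= u (2*k)%nat) -> ~ Un_cv u 0.
Proof.
  intros Hz Hu Hcv. destruct (Hcv z Hz) as [N HN].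
  specialize (HN (2*N)%nat ltac:(lia)). specialize (Hu N).
  unfold R_dist in HN. rewrite Rminus_0_r in HN.
  pose proof (Rle_abs (u (2*N)%nat)). lra.
Qed.

Lemma fixed_orbit lam b s r p : step lam b s r p = p -> forall n, orbit lam b s r p n = p.
Proof. intros H n; induction n; simpl; [reflexivity| rewrite IHn; exact H]. Qed.

Lemma orbit_S lam b s r p n : orbit lam b s r p (S n) = step lam b s r (orbit lam b s r p n).
Proof. reflexivity. Qed.

Lemma per2_orbit lam b s r z : 0 < s -> 0 < z ->
  (lam - 1) * ln z + (r + ln s) - 1 * z = 0 ->
  forall k, orbit lam b s r (z, 0) (2*k)%nat = (z, 0).
Proof.
  intros Hs Hz Hpsi k; induction k.
  - reflexivity.
  - replace (2 * S k)%nat with (S (S (2*k)))%nat by lia.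
    rewrite !orbit_S, IHk. unfold step; simpl.
    rewrite !Rmult_0_r, rpow_0, Rmult_0_l. f_equal.
    rewrite rpow_pos_eq by auto. rewrite <- (exp_ln s) at 1 by auto.
    rewrite <- (exp_ln z) at 3 by auto.
    rewrite <- !exp_plus. f_equal. lra.
Qed.

Lemma fst_SS lam b s r p n : fst (orbit lam b s r p (S (S n))) =
  s * (rpow (fst (orbit lam b s r p n)) lam *
       exp (r - b * fst (orbit lam b s r p (S n)) - fst (orbit lam b s r p n))).
Proof. rewrite !orbit_S. unfold step. simpl. reflexivity. Qed.

Lemma snd_eq lam b s r p n : 0 < s -> snd (orbit lam b s r p n) = fst (orbit lam b s r p (S n)) / s.
Proof. intros; rewrite orbit_S; unfold step; simpl; field; lra. Qed.

Lemma orbit_nonneg lam b s r x0 y0 : 0 < s -> 0 <= x0 -> 0 <= y0 -> forall n,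
  0 <= fst (orbit lam b s r (x0,y0) n) /\ 0 <= snd (orbit lam b s r (x0,y0) n).
Proof.
  intros Hs Hx Hy n; induction n; simpl; [lra|].
  destruct IHn as [H1 H2]. unfold step; simpl. split.
  - apply Rmult_le_pos; lra.
  - apply Rmult_le_pos; [apply rpow_nonneg| left; apply exp_pos].
Qed.

Lemma contract lam b s r x w : 1 < lam -> 0 < b -> 0 < s -> 0 <= x -> 0 <= w ->
  s * (rpow x lam * exp (r - b * w - x)) <=
  exp ((lam-1) * ln (lam-1) + (r + ln s) - (lam-1)) * x.
Proof.
  intros Hl Hb Hs Hx Hw. destruct Hx as [Hx|Hx]; [|subst; rewrite rpow_0; lra].
  rewrite rpow_pos_eq by auto.
  pose proof (max_prop (lam-1) 1 x ltac:(lra) ltac:(lra) Hx) as M.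
  replace ((lam-1)/1) with (lam-1) in M by field.
  rewrite <- (exp_ln s) at 1 by auto. rewrite <- (exp_ln x) at 3 by auto.
  rewrite <- !exp_plus. apply exp_le_mono.
  pose proof (Rmult_le_pos b w ltac:(lra) Hw). nra.
Qed.

Lemma cv_geom (v : nat -> R) M H : 0 <= H < 1 -> 0 <= M ->
  (forall n, 0 <= v n <= M * H ^ (Nat.div2 n)) -> Un_cv v 0.
Proof.
  intros HH HM Hv eps Heps.
  assert (Ha : Rabs H < 1) by (rewrite Rabs_pos_eq; lra).
  destruct (pow_lt_1_zero H Ha (eps/(M+1)) ltac:(apply Rdiv_lt_0_compat; lra)) as [N HN].
  exists (2*N)%nat. intros n Hn. unfold R_dist. rewrite Rminus_0_r.
  assert (Hk : (Nat.div2 n >= N)%nat) by (rewrite Nat.div2_div; apply Nat.div_le_lower_bound; lia).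
  specialize (HN _ Hk). specialize (Hv n).
  rewrite Rabs_pos_eq in HN by (apply pow_le; lra).
  rewrite Rabs_pos_eq by lra.
  assert (M * H ^ Nat.div2 n <= M * (eps / (M+1))) by (apply Rmult_le_compat_l; lra).
  assert (M * (eps/(M+1)) < eps).
  { assert (M * (eps/(M+1)) = eps - eps/(M+1)) by (field; lra).
    assert (0 < eps/(M+1)) by (apply Rdiv_lt_0_compat; lra). lra. }
  lra.
Qed.

Lemma conv_all lam b s r x0 y0 : 1 < lam -> 0 < b -> 0 < s ->
  r + ln s < (lam - 1) * (1 - ln (lam - 1)) -> 0 <= x0 -> 0 <= y0 ->
  conv0 lam b s r (x0, y0).
Proof.
  intros Hl Hb Hs Ha Hx Hy.
  set (H := exp ((lam-1) * ln (lam-1) + (r + ln s) - (lam-1))).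
  assert (HH : 0 <= H < 1).
  { unfold H; split; [left; apply exp_pos|]. apply (Rlt_le_trans _ (exp 0)); [apply exp_increasing | rewrite exp_0; lra].
    assert ((lam - 1) * (1 - ln (lam - 1)) = (lam-1) - (lam-1) * ln (lam-1)) by ring. lra. }
  set (M := x0 + s * y0).
  assert (Hsy : 0 <= s * y0) by (apply Rmult_le_pos; lra).
  assert (HM : 0 <= M) by (unfold M; lra).
  set (u := fun n => fst (orbit lam b s r (x0,y0) n)).
  assert (Hb2 : forall n, u n <= M * H ^ Nat.div2 n /\ u (S n) <= M * H ^ Nat.div2 (S n)).
  { induction n.
    - unfold u; simpl; unfold M; split; lra.
    - destruct IHn as [I1 I2]. split; [exact I2|].
      unfold u. rewrite fst_SS.
      pose proof (orbit_nonneg lam b s r x0 y0 Hs Hx Hy n) as [N1 _].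
      pose proof (orbit_nonneg lam b s r x0 y0 Hs Hx Hy (S n)) as [N2 _].
      eapply Rle_trans; [apply contract; auto|]. fold H.
      change (Nat.div2 (S (S n))) with (S (Nat.div2 n)). simpl pow.
      fold (u n). assert (H * u n <= H * (M * H ^ Nat.div2 n)) by (apply Rmult_le_compat_l; lra).
      lra. }
  assert (Cu : Un_cv u 0).
  { apply (cv_geom u M H HH HM). intro n; split; [apply orbit_nonneg; auto| apply Hb2]. }
  split; [exact Cu|].
  intros eps Heps. destruct (Cu (eps * s) ltac:(nra)) as [N HN].
  exists N; intros n Hn. rewrite snd_eq by auto.
  specialize (HN (S n) ltac:(lia)). unfold R_dist in *. rewrite Rminus_0_r in *.
  fold (u (S n)). unfold Rdiv. rewrite Rabs_mult, Rabs_inv, (Rabs_pos_eq s) by lra.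
  apply (Rmult_lt_reg_r s); [lra|]. rewrite Rmult_assoc, Rinv_l by lra. lra.
Qed.

Lemma cp_mul f g x : continuity_pt f x -> continuity_pt g x -> continuity_pt (fun t => f t * g t) x.
Proof. intros; apply (continuity_pt_mult f g x); auto. Qed.
Lemma cp_minus f g x : continuity_pt f x -> continuity_pt g x -> continuity_pt (fun t => f t - g t) x.
Proof. intros; apply (continuity_pt_minus f g x); auto. Qed.
Lemma cp_const c x : continuity_pt (fun _ => c) x.
Proof. apply continuity_pt_const; intros a b; reflexivity. Qed.
Lemma cp_id x : continuity_pt (fun t => t) x.
Proof. apply (derivable_continuous_pt id x (derivable_pt_id x)). Qed.
Lemma cp_exp f x : continuity_pt f x -> continuity_pt (fun t => exp (f t)) x.
Proof. intros H; apply (continuity_pt_comp f exp x H (derivable_continuous_pt _ _ (derivable_pt_exp _))). Qed.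
Lemma cp_ln f x : continuity_pt f x -> 0 < f x -> continuity_pt (fun t => ln (f t)) x.
Proof. intros H Hp; apply (continuity_pt_comp f ln x H).
  apply derivable_continuous_pt. exact (exist _ _ (derivable_pt_lim_ln _ Hp)). Qed.

Lemma cp_near f x eps : continuity_pt f x -> 0 < eps ->
  exists eta, 0 < eta /\ forall t, Rabs (t - x) < eta -> Rabs (f t - f x) < eps.
Proof.
  intros H He. unfold continuity_pt, continue_in, limit1_in, limit_in in H.
  destruct (H eps He) as [eta [Heta Ht]]. exists eta; split; auto.
  intros t Htx. destruct (Req_dec t x) as [->|Hne].
  - rewrite Rminus_diag, Rabs_R0; auto.
  - apply Ht. split; [split; [exact I|auto]|]. simpl. unfold Rdist. auto.
Qed.

Lemma cp_rpow f x l : continuity_pt f x -> 0 < f x -> continuity_pt (fun t => rpow (f t) l) x.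
Proof.
  intros H Hp.
  destruct (cp_near f x (f x) H Hp) as [eta [He Ht]].
  apply (continuity_pt_locally_ext (fun t => exp (l * ln (f t))) _ eta x He).
  - intros y Hy. unfold Rdist in Hy. specialize (Ht y Hy).
    rewrite rpow_pos_eq; auto. apply Rabs_def2 in Ht. lra.
  - apply cp_exp, cp_mul; [apply cp_const| apply cp_ln; auto].
Qed.

Lemma orbit_cont lam b s r y0 t0 : 0 < s -> 0 < t0 -> 0 < y0 -> forall n,
  continuity_pt (fun t => fst (orbit lam b s r (t,y0) n)) t0 /\
  continuity_pt (fun t => snd (orbit lam b s r (t,y0) n)) t0 /\
  0 < fst (orbit lam b s r (t0,y0) n) /\ 0 < snd (orbit lam b s r (t0,y0) n).
Proof.
  intros Hs Ht Hy n; induction n.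
  - simpl. split; [apply cp_id|split; [apply cp_const| lra]].
  - destruct IHn as [C1 [C2 [P1 P2]]]. simpl orbit. unfold step. simpl.
    split; [|split; [|split]].
    + apply cp_mul; [apply cp_const|exact C2].
    + apply cp_mul; [apply cp_rpow; auto|].
      apply cp_exp, cp_minus; [apply cp_minus|exact C1].
      * apply cp_const.
      * apply cp_mul; [apply cp_const| apply cp_mul; [apply cp_const|exact C2]].
    + apply Rmult_lt_0_compat; auto.
    + apply Rmult_lt_0_compat; [apply rpow_pos; auto| apply exp_pos].
Qed.

Lemma open_pos (F : nat -> R -> R) x k : (forall j, continuity_pt (F j) x) ->
  (forall j, (j < k)%nat -> 0 < F j x) ->
  exists eta, 0 < eta /\ forall t, Rabs (t - x) < eta -> forall j, (j < k)%nat -> 0 < F j t.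
Proof.
  intros HC; induction k; intros HP.
  - exists 1; split; [lra| intros; lia].
  - destruct IHk as [e1 [He1 H1]]; [intros; apply HP; lia|].
    destruct (cp_near (F k) x (F k x) (HC k) (HP k ltac:(lia))) as [e2 [He2 H2]].
    exists (Rmin e1 e2); split; [apply Rmin_pos; auto|].
    intros t Ht j Hj. pose proof (Rmin_l e1 e2); pose proof (Rmin_r e1 e2).
    destruct (Nat.eq_dec j k) as [->|Hne].
    + specialize (H2 t ltac:(lra)). apply Rabs_def2 in H2. lra.
    + apply H1; [lra|lia].
Qed.

Lemma connect (P Q : R -> Prop) al be : al < be -> P al -> Q be ->
  (forall t, al <= t <= be -> P t -> exists eta, 0 < eta /\ forall t', Rabs (t' - t) < eta -> P t') ->
  (forall t, al <= t <= be -> Q t -> exists eta, 0 < eta /\ forall t', Rabs (t' - t) < eta -> Q t') ->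
  (forall t, P t -> Q t -> False) ->
  exists t, al <= t <= be /\ ~ P t /\ ~ Q t.
Proof.
  intros Hab Pa Qb OP OQ Dis.
  set (T := fun x => al <= x <= be /\ forall t, al <= t <= x -> P t).
  assert (Tb : bound T) by (exists be; intros x [Hx _]; lra).
  assert (Ta : T al) by (split; [split; lra| intros t Ht; replace t with al by lra; auto]).
  destruct (completeness T Tb (ex_intro _ al Ta)) as [m [Hub Hlub]].
  assert (Hm1 : al <= m) by (apply Hub; auto).
  assert (Hm2 : m <= be) by (apply Hlub; intros x [Hx _]; lra).
  assert (Appr : forall t, t < m -> exists x, T x /\ t < x).
  { intros t Htm. apply NNPP; intro Hn.
    assert (m <= t); [|lra]. apply Hlub. intros x Tx.
    apply Rnot_lt_le. intro Hlt. apply Hn. exists x; auto. }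
  exists m; split; [lra|split].
  - intro Pm. destruct (OP m ltac:(lra) Pm) as [eta [He Hn]].
    set (x' := Rmin (m + eta/2) be).
    assert (Tx' : T x').
    { pose proof (Rmin_l (m+eta/2) be); pose proof (Rmin_r (m+eta/2) be).
      split; [split; [unfold x'; apply Rmin_glb; lra|unfold x'; lra]|].
      intros t Ht. unfold x' in Ht. destruct (Rlt_le_dec (m - eta) t).
      - apply Hn. apply Rabs_def1; lra.
      - destruct (Appr t ltac:(lra)) as [x [[_ Tx] Hx]]. apply Tx; lra. }
    pose proof (Hub x' Tx'). unfold x' in H. unfold Rmin in H.
    destruct (Rle_dec (m + eta/2) be); [lra|].
    assert (m = be) by lra. subst m. eapply Dis; eauto.
  - intro Qm. destruct (OQ m ltac:(lra) Qm) as [eta [He Hn]].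
    destruct (Appr (m - eta) ltac:(lra)) as [x [Tx Hx]].
    pose proof (Hub x Tx).
    assert (Q x) by (apply Hn; apply Rabs_def1; lra).
    destruct Tx as [Hx1 Tx]. apply (Dis x); auto. apply Tx; lra.
Qed.

Lemma stepform lam b s r u w : 0 < s -> 0 < u ->
  s * (rpow u lam * exp (r - b * w - u)) = u * exp ((lam-1) * ln u + (r + ln s) - u - b * w).
Proof.
  intros Hs Hu. rewrite rpow_pos_eq by auto.
  assert (E1 : forall E, u * exp E = exp (ln u + E)) by (intros; rewrite exp_plus, exp_ln; auto).
  rewrite E1. rewrite <- (exp_ln s) at 1 by auto.
  rewrite <- !exp_plus. f_equal. ring.
Qed.

Lemma exp_le1 E : E <= 0 -> exp E <= 1.
Proof. intros; rewrite <- exp_0; apply exp_le_mono; auto. Qed.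
Lemma exp_lt1 E : E < 0 -> exp E < 1.
Proof. intros; rewrite <- exp_0; apply exp_increasing; auto. Qed.
Lemma exp_gt1 E : 0 < E -> 1 < exp E.
Proof. intros; rewrite <- exp_0; apply exp_increasing; auto. Qed.

Lemma ln_le_mono x y : 0 < x -> x <= y -> ln x <= ln y.
Proof. intros Hx [H|H]; [left; apply ln_increasing; auto| subst; lra]. Qed.

Lemma b2 lam b s r : 1 < lam -> 0 < b -> 0 < s ->
  (lam - 1) * (1 - ln (lam - 1)) < r + ln s ->
  exists x0 y0, 0 < x0 /\ 0 < y0 /\ ~ conv0 lam b s r (x0, y0).
Proof.
  intros Hl Hb Hs Ha.
  set (a := r + ln s) in *.
  set (D0 := (lam-1) * ln (lam-1) + a - (lam-1)).
  assert (HD0 : 0 < D0).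
  { unfold D0. assert ((lam - 1) * (1 - ln (lam - 1)) = (lam-1) - (lam-1) * ln (lam-1)) by ring. lra. }
  set (del := Rmin ((lam-1)/2) (exp (-a/(lam-1)))).
  assert (Hdel : 0 < del) by (unfold del; apply Rmin_pos; [lra| apply exp_pos]).
  assert (Hdel2 : del <= (lam-1)/2) by apply Rmin_l.
  assert (Hpsi : forall x, 0 < x -> x <= del -> (lam-1) * ln x + a <= 0).
  { intros x Hx Hxd.
    assert (ln x <= -a/(lam-1)).
    { rewrite <- (ln_exp (-a/(lam-1))). apply ln_le_mono; auto.
      pose proof (Rmin_r ((lam-1)/2) (exp (-a/(lam-1)))). fold del in H. lra. }
    assert ((lam-1) * ln x <= (lam-1) * (-a/(lam-1))) by (apply Rmult_le_compat_l; lra).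
    assert ((lam-1) * (-a/(lam-1)) = -a) by (field; lra). lra. }
  set (eps := Rmin (del/2) (D0/(2*b))).
  assert (Heps : 0 < eps) by (unfold eps; apply Rmin_pos; [lra| apply Rdiv_lt_0_compat; lra]).
  assert (Heps1 : eps <= del/2) by apply Rmin_l.
  assert (Heps2 : b * eps <= D0/2).
  { pose proof (Rmin_r (del/2) (D0/(2*b))). fold eps in H.
    assert (b * eps <= b * (D0/(2*b))) by (apply Rmult_le_compat_l; lra).
    assert (b * (D0/(2*b)) = D0/2) by (field; lra). lra. }
  set (y0 := eps / s).
  assert (Hy0 : 0 < y0) by (unfold y0; apply Rdiv_lt_0_compat; lra).
  set (C := lam - 1).
  set (U := fun t n => fst (orbit lam b s r (t, y0) n)).
  assert (Upos : forall t n, 0 < t -> 0 < U t n).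
  { intros t n Ht. apply (orbit_cont lam b s r y0 t Hs Ht Hy0 n). }
  assert (Ucont : forall t n, 0 < t -> continuity_pt (fun t' => U t' n) t).
  { intros t n Ht. apply (orbit_cont lam b s r y0 t Hs Ht Hy0 n). }
  assert (U1 : forall t, U t 1%nat = eps) by (intros; unfold U, y0; simpl; field; lra).
  assert (USS : forall t n, 0 < t -> U t (S (S n)) =
     U t n * exp ((lam-1) * ln (U t n) + a - U t n - b * U t (S n))).
  { intros t n Ht. unfold U at 1. rewrite fst_SS. fold (U t n) (U t (S n)).
    apply stepform; auto. }
  assert (Odd : forall t k, 0 < t -> U t (S (2*k)) <= eps).
  { intros t k Ht; induction k.
    - rewrite U1; lra.
    - replace (S (2 * S k)) with (S (S (S (2*k)))) by lia.
      rewrite USS by auto.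
      pose proof (Upos t (S (2*k)) Ht). pose proof (Upos t (S (S (2*k))) Ht).
      pose proof (Hpsi _ H ltac:(lra)).
      assert (exp ((lam - 1) * ln (U t (S (2 * k))) + a - U t (S (2 * k)) - b * U t (S (S (2 * k)))) <= 1).
      { apply exp_le1. pose proof (Rmult_lt_0_compat b _ Hb H0). lra. }
      pose proof (Rmult_le_compat_l (U t (S (2*k))) _ _ (Rlt_le _ _ H) H2). lra. }
  set (Dset := fun t => exists k, U t (2*k)%nat < del /\ forall j, (j < k)%nat -> U t (2*j)%nat < C).
  set (Eset := fun t => exists k, C < U t (2*k)%nat /\ forall j, (j < k)%nat -> del < U t (2*j)%nat).
  assert (Dis : forall t, Dset t -> Eset t -> False).
  { intros t [k1 [H1 H1']] [k2 [H2 H2']].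
    destruct (Compare_dec.lt_eq_lt_dec k1 k2) as [[Hlt|Heq]|Hgt].
    - specialize (H2' k1 Hlt). lra.
    - subst. unfold C in *. lra.
    - specialize (H1' k2 Hgt). lra. }
  set (al := del/2).
  assert (Neither : forall t, al <= t -> ~ Dset t -> ~ Eset t -> ~ conv0 lam b s r (t, y0)).
  { intros t Ht ND NE [Cv _].
    assert (Htp : 0 < t) by (unfold al in Ht; lra).
    assert (Band : forall m j, (j < m)%nat -> del < U t (2*j)%nat < C).
    { induction m; intros j Hj; [lia|].
      destruct (Nat.eq_dec j m) as [->|Hne]; [|apply IHm; lia].
      destruct (total_order_T (U t (2*m)%nat) C) as [[lt|eq]|gt].
      - destruct (total_order_T (U t (2*m)%nat) del) as [[lt2|eq2]|gt2].
        + exfalso; apply ND. exists m; split; auto. intros j' Hj'; apply IHm; auto.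
        + exfalso; apply ND. exists (S m). split.
          * replace (2 * S m)%nat with (S (S (2*m))) by lia. rewrite USS by auto.
            rewrite eq2. pose proof (Hpsi del Hdel ltac:(lra)).
            pose proof (Upos t (S (2*m)) Htp).
            assert (exp ((lam - 1) * ln del + a - del - b * U t (S (2 * m))) < 1).
            { apply exp_lt1. pose proof (Rmult_lt_0_compat b _ Hb H0). lra. }
            pose proof (Rmult_lt_compat_l del _ _ Hdel H1). lra.
          * intros j' Hj'. destruct (Nat.eq_dec j' m) as [->|Hne']; [unfold C in *; lra|].
            apply IHm; lia.
        + split; auto.
      - exfalso; apply NE. exists (S m). split.
        * replace (2 * S m)%nat with (S (S (2*m))) by lia. rewrite USS by auto.
          rewrite eq. pose proof (Odd t m Htp). pose proof (Upos t (S (2*m)) Htp).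
          assert (1 < exp ((lam - 1) * ln C + a - C - b * U t (S (2 * m)))).
          { apply exp_gt1.
            assert (b * U t (S (2*m)) <= b * eps) by (apply Rmult_le_compat_l; lra).
            assert (D0 = (lam-1) * ln C + a - C) by (unfold D0, C; ring). lra. }
          assert (0 < C) by (unfold C; lra).
          pose proof (Rmult_lt_compat_l C _ _ H2 H1). lra.
        * intros j' Hj'. destruct (Nat.eq_dec j' m) as [->|Hne']; [unfold C in *; lra|].
          apply IHm; lia.
      - exfalso; apply NE. exists m; split; auto. intros j' Hj'; apply IHm; auto. }
    destruct (Cv del Hdel) as [N HN].
    specialize (HN (2*N)%nat ltac:(lia)). specialize (Band (S N) N ltac:(lia)).
    unfold R_dist in HN. rewrite Rminus_0_r in HN. fold (U t (2*N)%nat) in HN.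
    pose proof (Rle_abs (U t (2*N)%nat)). lra. }
  assert (Hab : al < lam) by (unfold al; lra).
  destruct (connect Dset Eset al lam Hab) as [t [Ht [ND NE]]].
  - exists 0%nat. split; [|intros; lia]. simpl. unfold U; simpl. unfold al; lra.
  - exists 0%nat. split; [|intros; lia]. unfold U; simpl. unfold C; lra.
  - intros t Ht [k [Hk Hj]]. assert (Htp : 0 < t) by (unfold al in Ht; lra).
    destruct (open_pos (fun j t' => C - U t' (2*j)%nat) t k) as [e1 [He1 H1]].
    { intro j. apply cp_minus; [apply cp_const| apply Ucont; auto]. }
    { intros j Hj'; specialize (Hj j Hj'); lra. }
    destruct (cp_near (fun t' => U t' (2*k)%nat) t (del - U t (2*k)%nat) (Ucont _ _ Htp) ltac:(lra)) as [e2 [He2 H2]].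
    exists (Rmin e1 e2); split; [apply Rmin_pos; auto|].
    intros t' Ht'. pose proof (Rmin_l e1 e2); pose proof (Rmin_r e1 e2).
    exists k; split.
    + specialize (H2 t' ltac:(lra)). apply Rabs_def2 in H2. lra.
    + intros j Hj'. specialize (H1 t' ltac:(lra) j Hj'). cbv beta in H1. lra.
  - intros t Ht [k [Hk Hj]]. assert (Htp : 0 < t) by (unfold al in Ht; lra).
    destruct (open_pos (fun j t' => U t' (2*j)%nat - del) t k) as [e1 [He1 H1]].
    { intro j. apply cp_minus; [apply Ucont; auto| apply cp_const]. }
    { intros j Hj'; specialize (Hj j Hj'); lra. }
    destruct (cp_near (fun t' => U t' (2*k)%nat) t (U t (2*k)%nat - C) (Ucont _ _ Htp) ltac:(lra)) as [e2 [He2 H2]].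
    exists (Rmin e1 e2); split; [apply Rmin_pos; auto|].
    intros t' Ht'. pose proof (Rmin_l e1 e2); pose proof (Rmin_r e1 e2).
    exists k; split.
    + specialize (H2 t' ltac:(lra)). apply Rabs_def2 in H2. lra.
    + intros j Hj'. specialize (H1 t' ltac:(lra) j Hj'). cbv beta in H1. lra.
  - exact Dis.
  - exists t, y0. split; [unfold al in Ht; lra| split; auto].
    apply Neither; auto; lra.
Qed.

Lemma fix_iff lam x E : 0 < x -> (x = rpow x lam * exp E <-> (lam-1) * ln x + E = 0).
Proof.
  intros Hx. rewrite rpow_pos_eq by auto. rewrite <- exp_plus. split; intro H.
  - apply (f_equal ln) in H. rewrite ln_exp in H. lra.
  - rewrite <- (exp_ln x) at 1 by auto. f_equal. lra.
Qed.

Lemma exp_eq1 E : exp E = 1 -> E = 0.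
Proof. intro H. rewrite <- (ln_exp E), H, ln_1. reflexivity. Qed.

Lemma ln_m lam b : 1 < lam -> 0 < b -> ln ((lam-1)/(b+1)) = ln (lam-1) - ln (b+1).
Proof. intros; unfold Rdiv; rewrite ln_mult, ln_Rinv; try lra; apply Rinv_0_lt_compat; lra. Qed.

Theorem mainTheorem11 (lam b s r : R)
  (Hlam : 1 < lam) (Hb : 0 < b) (Hs0 : 0 < s) (Hs1 : s <= 1) :
  let a := r + ln s in
  (* (a) *)
  ((forall x0 y0, 0 <= x0 -> 0 <= y0 -> conv0 lam b s r (x0, y0)) <->
     a < (lam - 1) * (1 - ln (lam - 1))) /\
  (* (b) *)
  ((lam - 1) * (1 - ln (lam - 1)) < a ->
   a < (lam - 1) * (1 - ln (lam - 1) + ln (b + 1)) ->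
     (forall x y, 0 <= x -> 0 <= y -> step lam b s r (x, y) = (x, y) ->
        x = 0 /\ y = 0) /\
     (exists x0 y0, 0 < x0 /\ 0 < y0 /\ ~ conv0 lam b s r (x0, y0))) /\
  (* (c) and (d) *)
  (b <= (lam - 1) / lam * exp (1 / (lam - 1)) - 1 ->
   (lam - 1) * (1 - ln (lam - 1) + ln (b + 1)) <= a ->
   a <= lam - (lam - 1) * ln lam ->
   forall xs, 0 < xs ->
     xs = rpow xs lam * exp (a - (b + 1) * xs) ->
     (forall x, 0 < x < xs -> x <> rpow x lam * exp (a - (b + 1) * x)) ->
     (exists x0 y0, 0 <= x0 < xs /\ 0 <= y0 < xs / s /\
        ~ conv0 lam b s r (x0, y0)) /\
     (exists x0 y0,
        ((xs <= x0 <= lam /\ 0 <= y0 <= xs / s) \/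
         (0 <= x0 <= xs /\ xs / s <= y0 <= lam / s)) /\
        ~ conv0 lam b s r (x0, y0))).
Proof.
  cbv zeta.
  split; [|split].
  - split.
    + intro Hall. apply Rnot_le_lt. intro Hge.
      assert ((lam - 1) * (1 - ln (lam - 1)) = (lam-1) - (lam-1) * ln (lam-1)) by ring.
      destruct (root_ex (lam-1) (r + ln s) 1 (lam-1)) as [z [[Hz _] Hroot]]; [lra|lra|lra|lra|].
      destruct (Hall z 0 ltac:(lra) ltac:(lra)) as [Cv _].
      refine (not_cv_even _ z Hz _ Cv).
      intro k. rewrite (per2_orbit lam b s r z Hs0 Hz Hroot k). simpl; lra.
    + intros Ha x0 y0 Hx Hy. apply conv_all; auto.
  - intros Hlo Hhi. split.
    + intros x y Hx Hy Heq. unfold step in Heq. simpl in Heq. injection Heq as E1 E2.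
      destruct Hx as [Hx|Hx]; [|subst x; rewrite rpow_0 in E2; split; lra].
      exfalso. rewrite E1 in E2.
      assert (E3 : s * (rpow x lam * exp (r - b * x - x)) = x) by (rewrite E2; lra).
      rewrite stepform in E3 by auto.
      assert (E4 : exp ((lam - 1) * ln x + (r + ln s) - x - b * x) = 1).
      { apply (Rmult_eq_reg_l x); [|lra]. rewrite Rmult_1_r; exact E3. }
      apply exp_eq1 in E4.
      pose proof (max_prop (lam-1) (b+1) x ltac:(lra) ltac:(lra) Hx) as M.
      rewrite ln_m in M by auto.
      assert ((b+1) * ((lam-1)/(b+1)) = lam - 1) by (field; lra).
      assert ((lam - 1) * (1 - ln (lam - 1) + ln (b + 1)) =
              (lam-1) - (lam-1) * (ln (lam-1) - ln (b+1))) by ring.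
      lra.
    + apply b2; auto.
  - intros _ _ _ xs Hxs Hfix Hmin.
    apply (fix_iff lam) in Hfix; auto.
    split.
    + destruct (root_ex (lam-1) (r + ln s) 1 xs) as [z [[Hz Hzx] Hroot]]; try lra.
      { pose proof (Rmult_lt_0_compat b xs Hb Hxs). lra. }
      assert (z <> xs).
      { intro; subst z. pose proof (Rmult_lt_0_compat b xs Hb Hxs). lra. }
      exists z, 0. split; [lra|split; [split; [lra| apply Rdiv_lt_0_compat; lra]|]].
      intros [Cv _]. refine (not_cv_even _ z Hz _ Cv).
      intro k. rewrite (per2_orbit lam b s r z Hs0 Hz Hroot k). simpl; lra.
    + assert (Hm : xs <= (lam-1)/(b+1)).
      { apply Rnot_lt_le; intro Hgt.
        pose proof (max_prop (lam-1) (b+1) xs ltac:(lra) ltac:(lra) Hxs) as M.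
        destruct (Rlt_le_dec ((lam-1) * ln ((lam-1)/(b+1)) + (r + ln s) - (b+1) * ((lam-1)/(b+1))) 0).
        - lra.
        - destruct (root_ex (lam-1) (r + ln s) (b+1) ((lam-1)/(b+1))) as [z [[Hz Hzm] Hroot]];
            try lra; [apply Rdiv_lt_0_compat; lra|].
          apply (Hmin z); [lra|]. apply fix_iff; auto. lra. }
      assert (Hm2 : (lam-1)/(b+1) < lam).
      { assert ((lam-1) - (lam-1)/(b+1) = (lam-1)*b/(b+1)) by (field; lra).
        assert (0 < (lam-1)*b/(b+1)) by (apply Rdiv_lt_0_compat; nra). lra. }
      exists xs, (xs/s). split.
      * left. split; [lra|]. split; [left; apply Rdiv_lt_0_compat; lra|lra].
      * assert (Fx : step lam b s r (xs, xs/s) = (xs, xs/s)).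
        { unfold step; simpl. f_equal; [field; lra|].
          replace (s * (xs/s)) with xs by (field; lra).
          apply (Rmult_eq_reg_l s); [|lra].
          rewrite stepform by auto.
          replace ((lam - 1) * ln xs + (r + ln s) - xs - b * xs) with 0 by lra.
          rewrite exp_0. field; lra. }
        intros [Cv _]. refine (not_cv_even _ xs Hxs _ Cv).
        intro k. rewrite (fixed_orbit _ _ _ _ _ Fx). simpl; lra.
Qed.
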